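(* Consider a single end device (node) in the time-slotted uplink system described in the context, with status-update arrival rate $\lambda\in(0,1]$, and put $\gamma=1-\lambda$. Let $k,m$ be positive integers. Suppose that in slot $t$ the node is scheduled and its transmission succeeds, so that the access point (AP) observes the local age $d_t=k$, and suppose that the AP does not successfully receive any packet from this node in any of the slots $t+1,\dots,t+m-1$. Then the destination AoI of the node satisfies $D_{t+m}=k+m$, and the conditional distribution of the local age $d_{t+m}$ given the AP's history of actions and observations (through slot $t+m-1$) is the vector $\bm{c}(k,m)=[c_{k,m}(d)]_{d=1,2,\dots}$ given by $$\bm{c}(k,m)=\left[\lambda,\lambda\gamma,\lambda\gamma^2,\dots,\lambda\gamma^{m-1},0,\dots,0,\gamma^m,0,\dots\right],$$ i.e. $c_{k,m}(d)=\lambda\gamma^{d-1}$ for $1\le d\le m$, $c_{k,m}(k+m)=\gamma^m$, and $c_{k,m}(d)=0$ for all other $d\ge 1$.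
   Context: System model: time is slotted, $t=0,1,2,\dots$. A node receives a new status update in each slot independently with probability $\lambda$ (Bernoulli arrivals) and keeps only the latest one. Its local age $d_t$ (system time of the latest update at the node) evolves as $d_{t+1}=1$ if an update arrives in slot $t$ and $d_{t+1}=d_t+1$ otherwise. In each slot the AP either schedules the node or not; if scheduled, the transmission succeeds with some probability $p\in(0,1]$ independently of everything else. If the node is scheduled and the transmission succeeds in slot $t$, the AP observes $d_t$ and the destination AoI becomes $D_{t+1}=d_t+1$; otherwise the AP observes nothing about $d_t$ and $D_{t+1}=D_t+1$. The AP's scheduling decisions may depend on its past actions and observations, but the AP never observes the arrivals directly. *)

(* Defs.v *)
From mathcomp Require Import all_boot all_order all_algebra.
Set Implicit Arguments. Unset Strict Implicit. Unset Printing Implicit Defensive.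
Import Order.TTheory GRing.Theory Num.Theory.
Local Open Scope ring_scope.

Definition slot := (bool * bool * bool)%type.
Definition slot0 : slot := (false, false, false).
Definition arr (e : slot) : bool := e.1.1.
Definition sch (e : slot) : bool := e.1.2.
Definition suc (e : slot) : bool := e.2.

(* AP-side record of one slot: (action, observation). *)
Definition hentry := (bool * option nat)%type.
Definition hentry0 : hentry := (false, None).

Definition step_d (d : nat) (e : slot) : nat := if arr e then 1%N else d.+1.
(* d_s given initial local age d0 and the outcomes of slots 0..s-1 *)
Definition age_at (d0 : nat) (w : seq slot) (s : nat) : nat :=
  foldl step_d d0 (take s w).

Definition obs_at (d0 : nat) (w : seq slot) (r : nat) : option nat :=
  let e := nth slot0 w r in
  if sch e && suc e then Some (age_at d0 w r) else None.

Definition hist (d0 : nat) (w : seq slot) (s : nat) : seq hentry :=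
  [seq (sch (nth slot0 w r), obs_at d0 w r) | r <- iota 0 s].

Definition Dage (D0 : nat) (h : seq hentry) : nat :=
  foldl (fun D (o : hentry) => match o.2 with Some d => d.+1 | None => D.+1 end) D0 h.

(* Probability weight of slot r of trajectory w: Bernoulli(lam) arrival,
   randomized scheduling policy pol (probability of scheduling given the
   AP's past history), success with probability p if scheduled. *)
Definition slot_weight (R : realFieldType) (lam p : R) (pol : seq hentry -> R)
  (d0 : nat) (w : seq slot) (r : nat) : R :=
  let e := nth slot0 w r in
  let q := pol (hist d0 w r) in
  (if arr e then lam else 1 - lam) *
  (if sch e then q * (if suc e then p else 1 - p)
   else (1 - q) * (if suc e then 0 else 1)).

Definition weight (R : realFieldType) (lam p : R) (pol : seq hentry -> R)
  (d0 : nat) (w : seq slot) : R :=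
  \prod_(r < size w) slot_weight lam p pol d0 w r.

Definition Prob (R : realFieldType) (lam p : R) (pol : seq hentry -> R)
  (d0 N : nat) (E : pred (seq slot)) : R :=
  \sum_(w : N.-tuple slot | E w) weight lam p pol d0 w.

Definition cvec (R : realFieldType) (lam : R) (k m d : nat) : R :=
  if (1 <= d <= m)%N then lam * (1 - lam) ^+ d.-1
  else if d == (k + m)%N then (1 - lam) ^+ m else 0.

(* Main.v *)
Require Import Defs.
From mathcomp Require Import all_boot all_order all_algebra.
From mathcomp Require Import ring zify.
Import Order.TTheory GRing.Theory Num.Theory.

Lemma ageS d0 (w : seq slot) s : (s < size w)%N ->
  age_at d0 w s.+1 = step_d (age_at d0 w s) (nth slot0 w s).
Proof. by move=> hs; rewrite /age_at (take_nth slot0 hs) foldl_rcons. Qed.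

Lemma age_eq d0 (w w' : seq slot) s : (s <= size w)%N -> (s <= size w')%N ->
  (forall r, (r < s)%N -> arr (nth slot0 w r) = arr (nth slot0 w' r)) ->
  age_at d0 w s = age_at d0 w' s.
Proof.
elim: s => [|s IH] h1 h2 ha; first by rewrite /age_at !take0.
rewrite !ageS // IH ?(ltnW h1) ?(ltnW h2) //; last by move=> r hr; apply: ha; apply: ltnW.
by rewrite /step_d ha.
Qed.

Lemma hist_take d0 w s s' : (s <= s')%N -> hist d0 w s = take s (hist d0 w s').
Proof. by move=> h; rewrite /hist -map_take take_iota (minn_idPl h). Qed.

Lemma nth_hist d0 w s r : (r < s)%N ->
  nth hentry0 (hist d0 w s) r = (sch (nth slot0 w r), obs_at d0 w r).
Proof. by move=> h; rewrite /hist (nth_map 0%N) ?size_iota // nth_iota. Qed.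

Lemma hist_eq d0 w w' s :
  (forall r, (r < s)%N -> sch (nth slot0 w r) = sch (nth slot0 w' r) /\ obs_at d0 w r = obs_at d0 w' r) ->
  hist d0 w s = hist d0 w' s.
Proof.
move=> H; apply/eq_in_map => r; rewrite mem_iota add0n => /andP[_ hr].
by case: (H r hr) => -> ->.
Qed.

Definition setS (t : nat) (w : seq slot) (a : seq bool) : seq slot :=
  mkseq (fun r => if (t <= r)%N then (nth false a (r - t), sch (nth slot0 w r), suc (nth slot0 w r))
                  else nth slot0 w r) (size w).

Lemma size_setS t w a : size (setS t w a) = size w.
Proof. by rewrite size_mkseq. Qed.

Lemma nth_setS t w a r : (r < size w)%N -> nth slot0 (setS t w a) r =
  if (t <= r)%N then (nth false a (r - t), sch (nth slot0 w r), suc (nth slot0 w r))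
  else nth slot0 w r.
Proof. by move=> h; rewrite nth_mkseq. Qed.

Lemma sch_setS t w a r : (r < size w)%N -> sch (nth slot0 (setS t w a) r) = sch (nth slot0 w r).
Proof. by move=> h; rewrite nth_setS //; case: ifP. Qed.
Lemma suc_setS t w a r : (r < size w)%N -> suc (nth slot0 (setS t w a) r) = suc (nth slot0 w r).
Proof. by move=> h; rewrite nth_setS //; case: ifP. Qed.
Lemma arr_setS t w a r : (r < size w)%N -> arr (nth slot0 (setS t w a) r) =
  if (t <= r)%N then nth false a (r - t) else arr (nth slot0 w r).
Proof. by move=> h; rewrite nth_setS //; case: ifP. Qed.

Lemma setS_setS t w a a' : setS t (setS t w a) a' = setS t w a'.
Proof.
apply: (@eq_from_nth _ slot0); rewrite !size_setS // => r hr.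
rewrite {1}nth_setS ?size_setS // [RHS]nth_setS //; case: ifP => htr.
  by rewrite sch_setS // suc_setS.
by rewrite nth_setS // htr.
Qed.

Definition getS (t m : nat) (w : seq slot) : seq bool := mkseq (fun i => arr (nth slot0 w (t + i))) m.

Lemma setS_getS t m w : size w = (t + m)%N -> setS t w (getS t m w) = w.
Proof.
move=> hw; apply: (@eq_from_nth _ slot0); rewrite ?size_setS // => r hr.
rewrite nth_setS //; case: ifP => // htr.
rewrite nth_mkseq ?subnKC //; last by rewrite ltn_subLR // -hw.
by case: (nth slot0 w r) => [[x y] z].
Qed.

Lemma getS_setS t m w a : size w = (t + m)%N -> size a = m -> getS t m (setS t w a) = a.
Proof.
move=> hw ha; apply: (@eq_from_nth _ false); rewrite ?size_mkseq // => i hi.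
by rewrite nth_mkseq // arr_setS ?hw ?ltn_add2l // leq_addr addKn.
Qed.

Lemma hist_setS d0 t m w a h : size w = (t + m)%N -> hist d0 w (t + m) = h ->
  (forall r, (t < r < t + m)%N -> (nth hentry0 h r).2 = None) ->
  hist d0 (setS t w a) (t + m) = h.
Proof.
move=> hw hh hN; rewrite -hh; apply: hist_eq => r hr.
have hr' : (r < size w)%N by rewrite hw.
split; first by rewrite sch_setS.
rewrite /obs_at sch_setS // suc_setS //.
case: (leqP r t) => hrt.
  rewrite (@age_eq d0 (setS t w a) w r) ?size_setS ?(ltnW hr') //.
  move=> r' hr'r; rewrite arr_setS; last by apply: ltn_trans hr'.
  by rewrite leqNgt (leq_trans hr'r hrt).
have := hN r; rewrite hrt hr => /(_ erefl).
by rewrite -hh nth_hist // /obs_at /=; case: ifP.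
Qed.

Lemma age_t d0 t m k w h : (0 < m)%N -> hist d0 w (t + m) = h ->
  nth hentry0 h t = (true, Some k) -> age_at d0 w t = k.
Proof.
move=> hm hh; have ht : (t < t + m)%N by rewrite -{1}(addn0 t) ltn_add2l.
rewrite -hh nth_hist // /obs_at.
by case: ifP => // _ [_ ->].
Qed.

Definition agef (k : nat) (a : seq bool) : nat :=
  foldl (fun d (b : bool) => if b then 1%N else d.+1) k a.

Lemma age_setS d0 t m k w a : size w = (t + m)%N -> size a = m ->
  age_at d0 w t = k -> age_at d0 (setS t w a) (t + m) = agef k a.
Proof.
move=> hw ha hk.
suff H : forall i, (i <= m)%N -> age_at d0 (setS t w a) (t + i) = agef k (take i a).
  by rewrite H // -ha take_size.
elim=> [|i IH] hi.
  rewrite addn0 take0 /= -hk; apply: age_eq; rewrite ?size_setS ?hw ?leq_addr //.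
  by move=> r hr; rewrite arr_setS ?hw ?(leq_trans hr (leq_addr _ _)) // leqNgt hr.
rewrite addnS ageS ?size_setS ?hw ?ltn_add2l // IH ?(ltnW hi) //.
rewrite (take_nth false) ?ha // /agef foldl_rcons /step_d arr_setS ?hw ?ltn_add2l //.
by rewrite leq_addr addKn.
Qed.
Local Open Scope ring_scope.
Set Implicit Arguments. Unset Strict Implicit.

Definition bern (R : realFieldType) (lam : R) (b : bool) : R := if b then lam else 1 - lam.
Definition restf (R : realFieldType) (p q : R) (e : slot) : R :=
  if sch e then q * (if suc e then p else 1 - p) else (1 - q) * (if suc e then 0 else 1).
Definition Cw (R : realFieldType) (lam p : R) (pol : seq hentry -> R) d0 (t m : nat) (w : seq slot) : R :=
  (\prod_(r < t) bern lam (arr (nth slot0 w r))) *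
  \prod_(r < t + m) restf p (pol (hist d0 w r)) (nth slot0 w r).
Definition Bw (R : realFieldType) (lam : R) (m : nat) (a : seq bool) : R :=
  \prod_(i < m) bern lam (nth false a i).

Lemma weight_split (R : realFieldType) (lam p : R) pol (d0 : nat) t m (w : seq slot) :
  size w = (t + m)%N ->
  weight lam p pol d0 w = (\prod_(r < t + m) bern lam (arr (nth slot0 w r))) *
     \prod_(r < t + m) restf p (pol (hist d0 w r)) (nth slot0 w r).
Proof. by move=> hw; rewrite /weight hw -big_split. Qed.

Lemma weight_setS (R : realFieldType) (lam p : R) pol (d0 : nat) t m (w : seq slot) a h :
  size w = (t + m)%N -> size a = m -> hist d0 w (t + m) = h ->
  (forall r, (t < r < t + m)%N -> (nth hentry0 h r).2 = None) ->
  weight lam p pol d0 (setS t w a) = Cw lam p pol (d0 : nat) t m w * Bw lam m a.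
Proof.
move=> hw ha hh hN.
have hs : size (setS t w a) = (t + m)%N by rewrite size_setS.
rewrite (weight_split _ _ _ _ hs) /Cw mulrAC; congr (_ * _); last first.
  apply: eq_bigr => r _.
  have hr : (r < size w)%N by rewrite hw.
  rewrite (@hist_take d0 (setS t w a) r (t + m)) ?(ltnW (ltn_ord r)) //.
  rewrite (@hist_take d0 w r (t + m)) ?(ltnW (ltn_ord r)) //.
  rewrite (@hist_setS d0 t m w a h hw hh hN) hh.
  by rewrite /restf sch_setS // suc_setS.
rewrite big_split_ord /Bw; congr (_ * _); apply: eq_bigr => i _ /=.
  by rewrite arr_setS ?hw ?(leq_trans (ltn_ord i) (leq_addr _ _)) // leqNgt ltn_ord.
by rewrite arr_setS ?hw ?ltn_add2l // leq_addr addKn.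
Qed.

Lemma setT_proof t m (b : (t + m).-tuple slot) (a : seq bool) : size (setS t b a) == (t + m)%N.
Proof. by rewrite size_setS size_tuple. Qed.
Definition setT t m (b : (t + m).-tuple slot) (a : m.-tuple bool) : (t + m).-tuple slot :=
  Tuple (setT_proof b a).
Lemma getT_proof t m (w : seq slot) : size (getS t m w) == m.
Proof. by rewrite size_mkseq. Qed.
Definition getT t m (w : (t + m).-tuple slot) : m.-tuple bool := Tuple (getT_proof t m w).
Definition baseT t m (b : (t + m).-tuple slot) := setT b (nseq_tuple m false).

Lemma decomp (R : realFieldType) t m (F : (t + m).-tuple slot -> R) :
  \sum_w F w = \sum_(b | baseT b == b) \sum_(a : m.-tuple bool) F (setT b a).
Proof.
rewrite (partition_big (@baseT t m) (fun b => baseT b == b)) /=; last first.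
  by move=> i _; apply/eqP/val_inj; rewrite /= setS_setS.
apply: eq_bigr => b /eqP hb.
rewrite (reindex_onto (@setT t m b) (@getT t m)) /=; last first.
  move=> i /eqP <-; apply/val_inj; rewrite /= setS_setS setS_getS //.
  by rewrite size_tuple.
apply: eq_bigl => a; apply/andP; split.
  by rewrite -{2}hb; apply/eqP/val_inj; rewrite /= setS_setS.
apply/eqP/val_inj; rewrite /= getS_setS ?size_tuple //.
Qed.

Lemma sum_cons (R : realFieldType) n (F : n.+1.-tuple bool -> R) :
  \sum_a F a = \sum_(b : bool) \sum_(a : n.-tuple bool) F [tuple of b :: a].
Proof.
rewrite pair_big /=.
rewrite (reindex (fun p : bool * n.-tuple bool => [tuple of p.1 :: p.2])) //.
exists (fun a : n.+1.-tuple bool => (thead a, [tuple of behead a])) => [[b a]|a] _ /=.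
  by rewrite theadE; congr pair; apply/val_inj.
by rewrite -tuple_eta.
Qed.

Lemma Bw_cons (R : realFieldType) (lam : R) n b a :
  Bw lam n.+1 (b :: a) = bern lam b * Bw lam n a.
Proof. by rewrite /Bw big_ord_recl /=; congr (_ * _); apply: eq_bigr => i _; rewrite lift0. Qed.

Lemma sum_Bw (R : realFieldType) (lam : R) n : \sum_(a : n.-tuple bool) Bw lam n a = 1.
Proof.
elim: n => [|n IH].
  by rewrite (eq_bigr (fun _ => 1)) ?sumr_const ?card_tuple // => a _; rewrite /Bw big_ord0.
rewrite sum_cons big_bool /=.
under eq_bigr do rewrite Bw_cons.
under [X in _ + X]eq_bigr do rewrite Bw_cons.
by rewrite -!big_distrr /= IH; ring.
Qed.

Lemma cvec_rec (R : realFieldType) (lam : R) k n d : (0 < k)%N ->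
  lam * cvec lam 1 n d + (1 - lam) * cvec lam k.+1 n d = cvec lam k n.+1 d.
Proof.
move=> hk; rewrite /cvec; case: d => [|d].
  by rewrite add1n addSn addnS /=; ring.
rewrite add1n addSn addnS !eqSS /= !ltnS.
case: (ltngtP d n) => [hlt|hgt|->] /=.
- ring.
-
  case: eqP => _; rewrite ?exprS; ring.
- have -> : (n == k + n)%N = false by rewrite -{1}(add0n n) eqn_add2r eq_sym; case: k hk.
  ring.
Qed.

Lemma agef_cons k b a : agef k (b :: a) = agef (if b then 1%N else k.+1) a.
Proof. by []. Qed.

Lemma sum_age (R : realFieldType) (lam : R) n k d : (0 < k)%N ->
  \sum_(a : n.-tuple bool | agef k a == d) Bw lam n a = cvec lam k n d.
Proof.
elim: n k => [|n IH] k hk.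
  rewrite /cvec /= addn0 eq_sym; have -> : (1 <= d <= 0)%N = false by case: d.
  case: eqP => [->|hne].
    rewrite (eq_bigl xpredT) ?sum_Bw ?expr0 // => a; by rewrite (tuple0 a) /= eqxx.
  rewrite big_pred0 // => a; rewrite (tuple0 a) /=; apply/eqP => h; apply: hne; by rewrite -h.
rewrite big_mkcond sum_cons big_bool /=.
under eq_bigr do rewrite Bw_cons /= -(mulr0 (bern lam true)) -fun_if.
under [X in _ + X]eq_bigr do rewrite Bw_cons /= -(mulr0 (bern lam false)) -fun_if.
rewrite -!big_distrr /= -!big_mkcond !IH //.
exact: cvec_rec.
Qed.

Definition Ssum (R : realFieldType) (lam p : R) pol (d0 t m : nat) h : R :=
  \sum_(b : (t + m).-tuple slot | baseT b == b)
     (if hist d0 b (t + m) == h then Cw lam p pol d0 t m b else 0).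

Lemma main_sum (R : realFieldType) (lam p : R) pol (d0 k t m : nat) h (P : pred nat) :
  (0 < m)%N -> nth hentry0 h t = (true, Some k) ->
  (forall r, (t < r < t + m)%N -> (nth hentry0 h r).2 = None) ->
  Prob lam p pol d0 (t + m) (fun w => (hist d0 w (t + m) == h) && P (age_at d0 w (t + m)))
  = Ssum lam p pol d0 t m h * \sum_(a : m.-tuple bool | P (agef k a)) Bw lam m a.
Proof.
move=> hm hht hN.
rewrite /Prob /Ssum big_mkcond decomp big_distrl /=.
apply eq_bigr => b /eqP hbase.
have hbs : size b = (t + m)%N by rewrite size_tuple.
case: eqP => hb.
  rewrite big_distrr /= [RHS]big_mkcond /=; apply: eq_bigr => a _.
  have has : size a = m by rewrite size_tuple.
  rewrite (@hist_setS d0 t m b a h hbs hb hN) eqxx /=.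
  rewrite (@age_setS d0 t m k b a hbs has (@age_t d0 t m k b h hm hb hht)).
  case: (P (agef k a)) => //.
  exact: (@weight_setS R lam p pol d0 t m b a h hbs has hb hN).
rewrite mul0r big1 // => a _.
case: eqP => //= hh; exfalso; apply: hb.
have hs' : size (setS t b a) = (t + m)%N by rewrite size_setS.
have := @hist_setS d0 t m (setS t b a) (nseq m false) h hs' hh hN.
rewrite setS_setS.
have -> : setS t b (nseq m false) = b by rewrite -{2}hbase.
by [].
Qed.

Lemma Dage_none D (s : seq hentry) : (forall x, x \in s -> x.2 = None) ->
  Dage D s = (D + size s)%N.
Proof.
elim: s D => [|x s IH] D H /=; first by rewrite addn0.
rewrite /Dage /= (H x (mem_head _ _)) -/(Dage _ _) IH ?addSnnS // => y hy.
by apply: H; rewrite in_cons hy orbT.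
Qed.

Lemma Dage_main D0 (h : seq hentry) t m k : (0 < m)%N -> size h = (t + m)%N ->
  nth hentry0 h t = (true, Some k) ->
  (forall r, (t < r < t + m)%N -> (nth hentry0 h r).2 = None) ->
  Dage D0 h = (k + m)%N.
Proof.
move=> hm hs hht hN.
have ht : (t < size h)%N by rewrite hs; lia.
rewrite -(cat_take_drop t h) (drop_nth hentry0 ht) /Dage foldl_cat /= hht.
rewrite -/(Dage _ _) Dage_none.
  by rewrite size_drop hs; lia.
move=> x /(nthP hentry0) [i hi <-].
rewrite nth_drop; apply: hN.
rewrite size_drop hs in hi; apply/andP; split; lia.
Qed.

Unset Implicit Arguments. Set Strict Implicit.
Theorem proposition1 (R : realFieldType) (lam p : R) (pol : seq hentry -> R)
  (d0 D0 k m t : nat) (h : seq hentry) :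
  0 < lam <= 1 -> 0 < p <= 1 -> (forall h', 0 <= pol h' <= 1) ->
  (0 < k)%N -> (0 < m)%N ->
  size h = (t + m)%N ->
  nth hentry0 h t = (true, Some k) ->
  (forall r, (t < r < t + m)%N -> (nth hentry0 h r).2 = None) ->
  0 < Prob lam p pol d0 (t + m) (fun w => hist d0 w (t + m) == h) ->
  Dage D0 h = (k + m)%N /\
  forall d, (0 < d)%N ->
    Prob lam p pol d0 (t + m)
      (fun w => (hist d0 w (t + m) == h) && (age_at d0 w (t + m) == d))
    / Prob lam p pol d0 (t + m) (fun w => hist d0 w (t + m) == h)
    = cvec lam k m d.
Proof.
move=> _ _ _ hk hm hs hht hN hpos.
split; first exact: Dage_main hm hs hht hN.
move=> d _.
have E0 : Prob lam p pol d0 (t + m) (fun w => hist d0 w (t + m) == h)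
          = Ssum lam p pol d0 t m h.
  rewrite -[RHS]mulr1 -(sum_Bw lam m).
  rewrite -(@main_sum R lam p pol d0 k t m h predT hm hht hN).
  by rewrite /Prob; apply: eq_bigl => w; rewrite andbT.
have E1 := @main_sum R lam p pol d0 k t m h (fun x => x == d) hm hht hN.
rewrite E1 E0 in hpos *.
rewrite (mulrC (Ssum _ _ _ _ _ _ _)) mulfK ?sum_age //.
by rewrite gt_eqF.
Qed.
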